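(* Let $B$ be an $A$-algebra which is an integral domain, and let $f:A\to B$ be an additive group homomorphism. Then for every positive integer $d$ and every $c\in A(d)$, $$M_d(f)(z+c)-M_d(f)(z)=M_d(1)\,f(c)\quad\text{in } B[z].$$
   Context: $q$ is a power of a prime, $A=\mathbb{F}_q[\theta]$, $A_+(d)$ is the set of monic polynomials in $A$ of degree $d$, and for $d\ge1$, $A(d)$ is the $\mathbb{F}_q$-vector space of polynomials in $A$ of degree $<d$. For a function $f:A\to B$ and $d\ge0$, the Carlitz approximation is $M_d(f)(z):=\sum_{b\in A_+(d)} f(b)\prod_{a\in A_+(d)\setminus\{b\}}(z-a)\in B[z]$. $M_d(1)$ denotes $M_d$ applied to the constant function $1$; it is a constant (equal to the image of $(-1)^dD_d/L_d$, where $D_d$ is the product of all monic polynomials of degree $d$ and $L_d$ the least common multiple of all polynomials of degree $d$). *)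

(* Defs.v *)
From HB Require Import structures.
From mathcomp Require Import all_boot all_order all_algebra.
Set Implicit Arguments. Unset Strict Implicit. Unset Printing Implicit Defensive.
Import GRing.Theory.
Local Open Scope ring_scope.

(* F is the finite field F_q (q = #|F|, automatically a prime power);
   A = {poly F} = F_q[theta]. *)

Definition monic_of (F : finFieldType) (d : nat) (t : d.-tuple F) : {poly F} :=
  'X^d + \sum_(i < d) tnth t i *: 'X^i.

Definition Aplus (F : finFieldType) (d : nat) : seq {poly F} :=
  [seq monic_of t | t : d.-tuple F].

(* Carlitz approximation M_d(f)(z) in B[z]; phi : A -> B is the structure map
   of the A-algebra B, used to view a in A inside B. *)
Definition Mapprox (F : finFieldType) (B : comNzRingType)
    (phi : {poly F} -> B) (f : {poly F} -> B) (d : nat) : {poly B} :=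
  \sum_(b <- Aplus F d)
     (f b)%:P * \prod_(a <- Aplus F d | a != b) ('X - (phi a)%:P).

(* Main.v *)
Require Import Defs.
From HB Require Import structures.
From mathcomp Require Import all_boot all_order all_algebra.
Import GRing.Theory.
Local Open Scope ring_scope.

Section Aux.
Variables (F : finFieldType) (B : idomainType)
    (phi : {rmorphism {poly F} -> B}).

Lemma poly_small (c : {poly F}) d : (size c <= d)%N ->
  c = \sum_(i < d) c`_i *: 'X^i.
Proof.
move=> hc; rewrite -poly_def; apply/polyP => k; rewrite coef_poly.
by case: ltnP => // hk; rewrite nth_default // (leq_trans hc hk).
Qed.

Definition shiftT d (c : {poly F}) (t : d.-tuple F) : d.-tuple F :=
  [tuple tnth t i + c`_i | i < d].
Arguments shiftT {d} c t.

Lemma monic_shift d (c : {poly F}) (t : d.-tuple F) : (size c <= d)%N ->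
  monic_of (shiftT c t) = monic_of t + c.
Proof.
move=> hc; rewrite /monic_of {2}(poly_small _ _ hc) -addrA -big_split /=.
congr (_ + _); apply: eq_bigr => i _; by rewrite tnth_mktuple scalerDl.
Qed.

Lemma shiftT_inj d (c : {poly F}) : injective (@shiftT d c).
Proof.
move=> t1 t2 /(congr1 (fun t => [tuple tnth t i - c`_i | i < d])) h.
apply: eq_from_tnth => i.
have := congr1 (fun t => tnth t i) h; rewrite /= !tnth_mktuple.
by rewrite !addrK.
Qed.

Lemma Mapprox_tuple (f : {poly F} -> B) d :
  Mapprox phi f d = \sum_(t : d.-tuple F) (f (monic_of t))%:P *
     \prod_(t' : d.-tuple F | monic_of t' != monic_of t)
        ('X - (phi (monic_of t'))%:P).
Proof.
rewrite /Mapprox /Aplus big_map big_enum /=; apply: eq_bigr => t _.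
by rewrite big_map big_enum_cond.
Qed.

Lemma comp_sum (I : Type) (r : seq I) (P : pred I) (G : I -> {poly B}) q :
  (\sum_(i <- r | P i) G i) \Po q = \sum_(i <- r | P i) (G i \Po q).
Proof. by apply: (big_morph (fun p => p \Po q)) => [x y|]; rewrite ?comp_polyD ?comp_poly0. Qed.

Lemma comp_prod (I : Type) (r : seq I) (P : pred I) (G : I -> {poly B}) q :
  (\prod_(i <- r | P i) G i) \Po q = \prod_(i <- r | P i) (G i \Po q).
Proof. by apply: (big_morph (fun p => p \Po q)) => [x y|]; rewrite ?comp_polyM ?comp_polyC. Qed.

End Aux.
Arguments monic_shift {F d c t}.
Arguments shiftT {F d} c t.

Theorem theorem4p1p9 (F : finFieldType) (B : idomainType)
    (phi : {rmorphism {poly F} -> B}) (f : {additive {poly F} -> B})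
    (d : nat) (c : {poly F}) :
  (0 < d)%N -> (size c <= d)%N ->
  Mapprox phi f d \Po ('X + (phi c)%:P) - Mapprox phi f d
    = Mapprox phi (fun _ => 1) d * (f c)%:P.
Proof.
move=> _ hc; rewrite !Mapprox_tuple comp_sum.
rewrite (reindex_inj (@shiftT_inj F d c)) /=.
rewrite big_distrl -sumrB; apply: eq_bigr => t _.
rewrite comp_polyM comp_polyC comp_prod.
rewrite (reindex_inj (@shiftT_inj F d c)) /=.
have -> : \prod_(j : d.-tuple F | monic_of (shiftT c j) != monic_of (shiftT c t))
    (('X - (phi (monic_of (shiftT c j)))%:P) \Po ('X + (phi c)%:P)) =
    \prod_(j : d.-tuple F | monic_of j != monic_of t) ('X - (phi (monic_of j))%:P).
  apply: eq_big => [j|j _]; first by rewrite !monic_shift // (inj_eq (addIr c)).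
  rewrite comp_polyB comp_polyX comp_polyC monic_shift // rmorphD /=.
  by rewrite polyCD opprD addrA addrAC addrK.
by rewrite (@monic_shift F d c t hc) raddfD /= polyCD mulrDl addrC addKr mul1r mulrC.
Qed.
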